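(* Let $n$ be even and $F_4(X)=X^{2^n-2}$ on $\mathbb{F}_{2^n}$. For $a,b\in\mathbb{F}_{2^n}^*$, $\mathrm{FBCT}_{F_4}(a,b)=2^n$ if $a=b$; $=4$ if $(a/b)^2+a/b+1=0$; and $=0$ otherwise.
   Context: For $F:\mathbb{F}_{2^n}\to\mathbb{F}_{2^n}$ and $a,b\in\mathbb{F}_{2^n}$, $\mathrm{FBCT}_F(a,b)=|\{X\in\mathbb{F}_{2^n}: F(X+a+b)+F(X+b)+F(X+a)+F(X)=0\}|$. *)

(* Defs.v *)
From mathcomp Require Import all_boot all_algebra all_field.
Set Implicit Arguments. Unset Strict Implicit. Unset Printing Implicit Defensive.
Import GRing.Theory.
Local Open Scope ring_scope.

Definition FBCT (F : finFieldType) (G : F -> F) (a b : F) : nat :=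
  #|[set X : F | G (X + a + b) + G (X + b) + G (X + a) + G X == 0]|.

(* The power map X |-> X^(2^n - 2) (the inverse function for #|F| = 2^n). *)
Definition F4 (F : finFieldType) (n : nat) (x : F) : F := x ^+ (2 ^ n - 2)%N.

(* Main.v *)
Require Import Defs.
From mathcomp Require Import all_boot all_algebra all_field.
From mathcomp Require Import ring.
Import GRing.Theory.
Local Open Scope ring_scope.

Section Aux.
Variable F : fieldType.
Hypothesis two0 : (2 : F) = 0.

Lemma c2_addrr (x : F) : x + x = 0.
Proof. by rewrite -mulr2n -mulr_natr two0 mulr0. Qed.

Lemma c2_eq (x y : F) : x + y = 0 -> x = y.
Proof. by move=> h; have := congr1 (fun z => z + y) h; rewrite -addrA c2_addrr addr0 add0r. Qed.

Lemma c2_E (X a b : F) : X != 0 -> X + a != 0 -> X + b != 0 -> X + a + b != 0 ->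
  ((X + a + b)^-1 + (X + b)^-1 + (X + a)^-1 + X^-1) * (X * (X + a) * (X + b) * (X + a + b))
  = a * b * (a + b).
Proof.
move=> h1 h2 h3 h4.
have -> : ((X + a + b)^-1 + (X + b)^-1 + (X + a)^-1 + X^-1) * (X * (X + a) * (X + b) * (X + a + b))
  = a * b * (a + b) + 2 * (2 * X ^+ 3 + 3 * X ^+ 2 * b + 3 * X ^+ 2 * a
   + 3 * X * a * b + X * a ^+ 2 + X * b ^+ 2).
  by field; rewrite h1 h2 h3 h4.
by rewrite two0 mul0r addr0.
Qed.

Lemma c2_S (a b : F) : a != 0 -> b != 0 -> a + b != 0 ->
  (a^-1 + b^-1 + (a + b)^-1) * (a * b * (a + b)) = b ^+ 2 * ((a / b) ^+ 2 + a / b + 1).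
Proof.
move=> h1 h2 h3.
have -> : (a^-1 + b^-1 + (a + b)^-1) * (a * b * (a + b)) = b ^+ 2 * ((a / b) ^+ 2 + a / b + 1) + 2 * (a * b).
  by field; rewrite h1 h2 h3.
by rewrite two0 mul0r addr0.
Qed.
End Aux.

Theorem mainTheorem13 (F : finFieldType) (n : nat)
  (hn : ~~ odd n) (hF : #|F| = (2 ^ n)%N) (a b : F)
  (ha : a != 0) (hb : b != 0) :
  FBCT (F4 n) a b =
    (if a == b then (2 ^ n)%N
     else if (a / b) ^+ 2 + a / b + 1 == 0 then 4%N
     else 0%N).
Proof.
have pc : (2%N \in [pchar F]) by apply: (card_finPcharP hF).
have two0 : (2 : F) = 0 by exact: (pcharf0 pc).
have n2 : (2 <= n)%N.
  case: n hn hF => [|[|n]] //= _ hF.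
  by have := finNzRing_gt1 F; rewrite hF.
have h4n : (2 ^ 2 <= 2 ^ n)%N by rewrite leq_exp2l.
have hpos : (0 < 2 ^ n - 2)%N by rewrite subn_gt0 (leq_trans _ h4n).
have F4E (x : F) : F4 n x = x^-1.
  rewrite /F4; have [->|x0] := eqVneq x 0.
    by rewrite invr0 expr0n (gtn_eqF hpos).
  have h1 : (#|F| = (#|F| - 2).+1.+1)%N.
    by rewrite hF -[RHS]addn2 subnK // (leq_trans _ h4n).
  apply: (mulIf x0); rewrite mulVf // -exprSr -hF.
  have e := expf_card x; rewrite {1}h1 exprS in e.
  by apply: (mulfI x0); rewrite mulr1.
rewrite /FBCT.
set E := fun X : F => (X + a + b)^-1 + (X + b)^-1 + (X + a)^-1 + X^-1.
have -> : [set X | F4 n (X + a + b) + F4 n (X + b) + F4 n (X + a) + F4 n X == 0]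
        = [set X | E X == 0] by apply/setP => X; rewrite !inE !F4E.
have [eab|hab] := eqVneq a b.
  rewrite -hF -cardsT; apply: eq_card => X; rewrite !inE /E eab.
  rewrite -(addrA X b b) (@c2_addrr _ two0) addr0.
  by rewrite -!addrA (addrA (X + b)^-1) (@c2_addrr _ two0) add0r (@c2_addrr _ two0) eqxx.
have hab0 : a + b != 0 by apply: contra hab => /eqP /(@c2_eq _ two0) ->.
set S := a^-1 + b^-1 + (a + b)^-1.
have SE : (S == 0) = ((a / b) ^+ 2 + a / b + 1 == 0).
  have := @c2_S _ two0 a b ha hb hab0; rewrite -/S => h.
  apply/idP/idP => /eqP h0.
    by move: h; rewrite h0 mul0r => /esym/eqP; rewrite mulf_eq0 expf_eq0 (negbTE hb) /=.
  by move: h; rewrite h0 mulr0 => /eqP; rewrite !mulf_eq0 (negbTE ha) (negbTE hb) (negbTE hab0) !orbF.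
have EV X : X \in [:: 0; a; b; a + b] -> E X = S.
  rewrite !inE /E => /or4P [] /eqP ->.
  - by rewrite !add0r invr0 addr0 /S; ring.
  - rewrite (@c2_addrr _ two0) add0r invr0 addr0 /S; ring.
  - have e : b + a + b = a by rewrite addrC addrA (@c2_addrr _ two0) add0r.
    rewrite e (@c2_addrr _ two0) invr0 addr0 /S (addrC b a); ring.
  - have e2 : a + b + b = a by rewrite -addrA (@c2_addrr _ two0) addr0.
    have e3 : a + b + a = b by rewrite addrAC (@c2_addrr _ two0) add0r.
    have e1 : a + b + a + b = 0 by rewrite e3 (@c2_addrr _ two0).
    rewrite e1 e2 e3 invr0 add0r /S; ring.
have ENV X : X \notin [:: 0; a; b; a + b] -> E X != 0.
  rewrite !inE => hX.
  have h1 : X != 0 by apply: contra hX => ->.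
  have h2 : X + a != 0 by apply: contra hX => /eqP /(@c2_eq _ two0) ->; rewrite eqxx orbT.
  have h3 : X + b != 0 by apply: contra hX => /eqP /(@c2_eq _ two0) ->; rewrite eqxx !orbT.
  have h4 : X + a + b != 0.
    apply: contra hX => /eqP /(@c2_eq _ two0) hh.
    have hX' : X = a + b by rewrite -hh addrC -addrA (@c2_addrr _ two0) addr0.
    by rewrite hX' eqxx !orbT.
  apply/eqP => h0; have := @c2_E _ two0 X a b h1 h2 h3 h4; rewrite -/(E X) h0 mul0r => /esym/eqP.
  by rewrite !mulf_eq0 (negbTE ha) (negbTE hb) (negbTE hab0).
have huniq : uniq [:: 0; a; b; a + b].
  rewrite /= !inE !negb_or eq_sym ha eq_sym hb eq_sym hab0 hab /=.
  rewrite -[a in a != _]addr0 (inj_eq (addrI a)) eq_sym hb /=.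
  by rewrite -[X in X != _]add0r (inj_eq (addIr b)) eq_sym ha.
case: ifP => hc.
  have -> : [set X | E X == 0] = [set X in [:: 0; a; b; a + b]].
    apply/setP => X; rewrite !in_set; case hX: (X \in [:: 0; a; b; a + b]).
      by rewrite EV // SE hc.
    by apply/negbTE/ENV; rewrite hX.
  by rewrite cardsE; move/card_uniqP: huniq.
rewrite -(cards0 F); apply: eq_card => X; rewrite !inE.
case hX: (X \in [:: 0; a; b; a + b]).
  by rewrite EV // SE hc.
by apply/negbTE/ENV; rewrite hX.
Qed.
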